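(* Let $k\ge1$ and let $(A,t)$ be a nontrivial $\mathcal{C}_k$-algebra. The following are equivalent: (i) $(A,t)$ is a simple algebra; (ii) for every $a\in A$ with $a\neq1$, $\bigwedge_{j=1}^{k}t^j(\triangle a)=0$; (iii) $K(A)=\{0,1\}$, where $K(A)=\{x\in A: t(x)=x=\nabla x\}$.
   Context: A modal pseudocomplemented De Morgan algebra ($mpM$-algebra) is an algebra $\langle A,\wedge,\vee,\sim,{}^\ast,0,1\rangle$ such that $\langle A,\wedge,\vee,\sim,0,1\rangle$ is a De Morgan algebra (bounded distributive lattice with $\sim\sim x=x$, $\sim(x\vee y)=\sim x\wedge\sim y$), $x^\ast$ is the pseudocomplement of $x$, and $x\vee\sim x\le x\vee x^\ast$. Put $\nabla x=\sim(\sim x\wedge x^\ast)$, $\triangle x=\sim\nabla\sim x$. A $\mathcal{C}_k$-algebra ($k\ge1$) is a pair $(A,t)$ with $A$ an $mpM$-algebra and $t$ an $mpM$-automorphism of $A$ with $t^k=\mathrm{id}$; simplicity refers to the signature $(\wedge,\vee,\sim,{}^\ast,t,0,1)$. *)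

(* Defs.v *)
From Stdlib Require Import Arith.

Set Implicit Arguments.

Record mpM_sig := MpMSig {
  car :> Type;
  meet : car -> car -> car;
  join : car -> car -> car;
  neg  : car -> car;
  star : car -> car;
  zero : car;
  one  : car
}.

Section Defs.
Variable A : mpM_sig.

Definition le (x y : A) : Prop := meet A x y = x.

Definition is_bdl : Prop :=
  (forall x y z, meet A x (meet A y z) = meet A (meet A x y) z) /\
  (forall x y z, join A x (join A y z) = join A (join A x y) z) /\
  (forall x y, meet A x y = meet A y x) /\
  (forall x y, join A x y = join A y x) /\
  (forall x y, meet A x (join A x y) = x) /\
  (forall x y, join A x (meet A x y) = x) /\
  (forall x y z, meet A x (join A y z) = join A (meet A x y) (meet A x z)) /\
  (forall x, join A x (zero A) = x) /\
  (forall x, meet A x (one A) = x).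

Definition is_DeMorgan : Prop :=
  is_bdl /\
  (forall x, neg A (neg A x) = x) /\
  (forall x y, neg A (join A x y) = meet A (neg A x) (neg A y)).

Definition is_pseudocomplement : Prop :=
  forall x y, meet A x y = zero A <-> le y (star A x).

Definition is_mpM : Prop :=
  is_DeMorgan /\ is_pseudocomplement /\
  (forall x, le (join A x (neg A x)) (join A x (star A x))).

Definition nabla (x : A) : A := neg A (meet A (neg A x) (star A x)).
Definition triangle (x : A) : A := neg A (nabla (neg A x)).

Definition is_mpM_automorphism (t : A -> A) : Prop :=
  (forall x y, t x = t y -> x = y) /\ (forall y, exists x, t x = y) /\
  (forall x y, t (meet A x y) = meet A (t x) (t y)) /\
  (forall x y, t (join A x y) = join A (t x) (t y)) /\
  (forall x, t (neg A x) = neg A (t x)) /\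
  (forall x, t (star A x) = star A (t x)) /\
  t (zero A) = zero A /\ t (one A) = one A.

Definition is_Ck (k : nat) (t : A -> A) : Prop :=
  is_mpM /\ is_mpM_automorphism t /\ (forall x, Nat.iter k t x = x).

Definition nontrivial : Prop := exists x y : A, x <> y.

Definition is_congruence (t : A -> A) (R : A -> A -> Prop) : Prop :=
  (forall x, R x x) /\ (forall x y, R x y -> R y x) /\
  (forall x y z, R x y -> R y z -> R x z) /\
  (forall x x' y y', R x x' -> R y y' -> R (meet A x y) (meet A x' y')) /\
  (forall x x' y y', R x x' -> R y y' -> R (join A x y) (join A x' y')) /\
  (forall x x', R x x' -> R (neg A x) (neg A x')) /\
  (forall x x', R x x' -> R (star A x) (star A x')) /\
  (forall x x', R x x' -> R (t x) (t x')).

Definition simple (t : A -> A) : Prop :=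
  nontrivial /\
  forall R, is_congruence t R ->
    (forall x y, R x y -> x = y) \/ (forall x y, R x y).

Fixpoint bigmeet_iter (t : A -> A) (n : nat) (a : A) : A :=
  match n with
  | O => one A
  | S m => meet A (bigmeet_iter t m a) (Nat.iter (S m) t a)
  end.

Definition inK (t : A -> A) (x : A) : Prop := t x = x /\ x = nabla x.

End Defs.

(* Main.v *)
Require Import Defs.
From Stdlib Require Import Arith Lia Classical.

Section Lat.
Variable A : mpM_sig.
Hypothesis HA : is_mpM A.

Local Notation mt := (meet A).
Local Notation jn := (join A).
Local Notation ng := (neg A).
Local Notation st := (star A).
Local Notation z0 := (zero A).
Local Notation o1 := (one A).
Local Notation le := (le A).

Lemma mA x y z : mt x (mt y z) = mt (mt x y) z.
Proof. destruct HA as [[[H _] _] _]; apply H. Qed.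
Lemma jA x y z : jn x (jn y z) = jn (jn x y) z.
Proof. destruct HA as [[[_ [H _]] _] _]; apply H. Qed.
Lemma mC x y : mt x y = mt y x.
Proof. destruct HA as [[[_ [_ [H _]]] _] _]; apply H. Qed.
Lemma jC x y : jn x y = jn y x.
Proof. destruct HA as [[[_ [_ [_ [H _]]]] _] _]; apply H. Qed.
Lemma mab x y : mt x (jn x y) = x.
Proof. destruct HA as [[[_ [_ [_ [_ [H _]]]]] _] _]; apply H. Qed.
Lemma jab x y : jn x (mt x y) = x.
Proof. destruct HA as [[[_ [_ [_ [_ [_ [H _]]]]]] _] _]; apply H. Qed.
Lemma mD x y z : mt x (jn y z) = jn (mt x y) (mt x z).
Proof. destruct HA as [[[_ [_ [_ [_ [_ [_ [H _]]]]]]] _] _]; apply H. Qed.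
Lemma j0 x : jn x z0 = x.
Proof. destruct HA as [[[_ [_ [_ [_ [_ [_ [_ [H _]]]]]]]] _] _]; apply H. Qed.
Lemma m1 x : mt x o1 = x.
Proof. destruct HA as [[[_ [_ [_ [_ [_ [_ [_ [_ H]]]]]]]] _] _]; apply H. Qed.
Lemma nn x : ng (ng x) = x.
Proof. destruct HA as [[_ [H _]] _]; apply H. Qed.
Lemma nj x y : ng (jn x y) = mt (ng x) (ng y).
Proof. destruct HA as [[_ [_ H]] _]; apply H. Qed.
Lemma pc x y : mt x y = z0 <-> le y (st x).
Proof. destruct HA as [_ [H _]]; apply H. Qed.
Lemma ax x : le (jn x (ng x)) (jn x (st x)).
Proof. destruct HA as [_ [_ H]]; apply H. Qed.

Lemma mid x : mt x x = x.
Proof. rewrite <- (jab x x) at 2. apply mab. Qed.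
Lemma le_refl x : le x x.
Proof. apply mid. Qed.
Lemma le_join x y : le x y <-> jn x y = y.
Proof. unfold Defs.le; split; intro H.
 - rewrite <- H, (mC x y), jC. apply jab.
 - rewrite <- H. apply mab. Qed.
Lemma le_trans x y z : le x y -> le y z -> le x z.
Proof. unfold Defs.le; intros H1 H2. rewrite <- H1, <- mA, H2. reflexivity. Qed.
Lemma le_anti x y : le x y -> le y x -> x = y.
Proof. unfold Defs.le; intros H1 H2. rewrite <- H1, mC. exact H2. Qed.
Lemma lb1 x y : le (mt x y) x.
Proof. unfold Defs.le. rewrite (mC x y), <- mA, mid. reflexivity. Qed.
Lemma lb2 x y : le (mt x y) y.
Proof. unfold Defs.le. rewrite <- mA, mid. reflexivity. Qed.
Lemma glb x y z : le z x -> le z y -> le z (mt x y).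
Proof. unfold Defs.le; intros H1 H2. rewrite mA, H1. exact H2. Qed.
Lemma le_meet z x y : le z (mt x y) <-> le z x /\ le z y.
Proof. split.
 - intro H; split; eapply le_trans; eauto using lb1, lb2.
 - intros [? ?]; apply glb; auto. Qed.
Lemma ub1 x y : le x (jn x y).
Proof. apply mab. Qed.
Lemma ub2 x y : le y (jn x y).
Proof. rewrite jC; apply mab. Qed.
Lemma lub x y z : le x z -> le y z -> le (jn x y) z.
Proof. rewrite !le_join; intros H1 H2. rewrite <- jA, H2. exact H1. Qed.
Lemma bot x : le z0 x.
Proof. apply le_join. rewrite jC. apply j0. Qed.
Lemma top x : le x o1.
Proof. apply m1. Qed.
Lemma le0 x : le x z0 -> x = z0.
Proof. intro H. apply le_anti; auto using bot. Qed.
Lemma le1 x : le o1 x -> x = o1.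
Proof. intro H. apply le_anti; auto using top. Qed.
Lemma m0 x : mt x z0 = z0.
Proof. rewrite mC. apply bot. Qed.
Lemma m1l x : mt o1 x = x.
Proof. rewrite mC. apply m1. Qed.
Lemma j0l x : jn z0 x = x.
Proof. rewrite jC. apply j0. Qed.
Lemma mmono x y z : le x y -> le (mt x z) (mt y z).
Proof. intro H. apply glb. eapply le_trans; [apply lb1|exact H]. apply lb2. Qed.
Lemma nanti x y : le x y -> le (ng y) (ng x).
Proof. intro H. apply le_join in H.
 assert (E : ng y = mt (ng x) (ng y)) by (rewrite <- nj, H; reflexivity).
 rewrite E. apply lb1. Qed.
Lemma nm x y : ng (mt x y) = jn (ng x) (ng y).
Proof. rewrite <- (nn (jn (ng x) (ng y))), nj, !nn. reflexivity. Qed.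
Lemma n0 : ng z0 = o1.
Proof. apply le1. rewrite <- (nn o1). apply nanti, bot. Qed.
Lemma n1 : ng o1 = z0.
Proof. rewrite <- n0, nn. reflexivity. Qed.
Lemma mstar x : mt x (st x) = z0.
Proof. apply pc, le_refl. Qed.
Lemma santi x y : le x y -> le (st y) (st x).
Proof. intro H. apply pc. apply le0. eapply le_trans.
 apply mmono, H. rewrite mstar. apply le_refl. Qed.
Lemma s0 : st z0 = o1.
Proof. apply le1. apply pc. apply m1. Qed.
Lemma le_zero_of u a b : le u a -> le u b -> mt a b = z0 -> u = z0.
Proof. intros H1 H2 H3. apply le0. rewrite <- H3. apply glb; auto. Qed.
Lemma ax' y : le (mt (ng y) (ng (st y))) y.
Proof. eapply le_trans. rewrite <- nj. apply nanti, ax. rewrite nj, nn. apply lb2. Qed.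

Lemma nabla_eq x : nabla A x = jn x (ng (st x)).
Proof. unfold nabla. rewrite nm, nn. reflexivity. Qed.
Lemma tri_eq x : triangle A x = mt x (st (ng x)).
Proof. unfold triangle, nabla. rewrite !nn. reflexivity. Qed.
Lemma x_le_nabla x : le x (nabla A x).
Proof. rewrite nabla_eq. apply ub1. Qed.
Lemma tri_le x : le (triangle A x) x.
Proof. rewrite tri_eq. apply lb1. Qed.

Definition P x := mt x (ng x) = z0.

Lemma N1 y : P (nabla A y).
Proof. unfold P. unfold nabla at 2. rewrite nn, nabla_eq, mC, mD.
 apply le0, lub.
 - eapply le_trans. apply glb; [apply lb2|]. eapply le_trans; [apply lb1|apply lb2].
   rewrite mstar. apply le_refl.
 - eapply le_trans. apply glb. eapply le_trans; [apply lb1|apply lb2].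
   eapply le_trans; [|apply ax']. apply glb. eapply le_trans; [apply lb1|apply lb1]. apply lb2.
   rewrite mC, mstar. apply le_refl.
Qed.

Lemma P_nabla x : P x -> nabla A x = x.
Proof. unfold P; intro H. rewrite nabla_eq. rewrite jC.
 apply le_join. rewrite <- (nn x) at 2. apply nanti. apply pc. exact H. Qed.
Lemma P_tri a : P (triangle A a).
Proof. unfold P, triangle. rewrite nn, mC. apply N1. Qed.
Lemma P1 : P o1.
Proof. unfold P. rewrite n1. apply m0. Qed.
Lemma P0 : P z0.
Proof. unfold P. rewrite n0. apply m1. Qed.
Lemma Pm x y : P x -> P y -> P (mt x y).
Proof. unfold P; intros Hx Hy. rewrite nm, mD. apply le0, lub.
 - rewrite <- Hx. apply glb. eapply le_trans; apply lb1. apply lb2.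
 - rewrite <- Hy. apply glb. eapply le_trans; [apply lb1|apply lb2]. apply lb2. Qed.
Lemma compl1 y : jn (nabla A y) (ng (nabla A y)) = o1.
Proof. rewrite <- (nn (nabla A y)) at 1. rewrite <- nm, mC. rewrite (N1 y). apply n0. Qed.
Lemma le_from_compl u v : P u -> jn v (ng u) = o1 -> le u v.
Proof. unfold P; intros H1 H2. unfold Defs.le.
 rewrite <- (m1 u) at 2. rewrite <- H2, mD, H1, j0. reflexivity. Qed.


Variable t : A -> A.
Hypothesis Ht : is_mpM_automorphism A t.

Lemma tm x y : t (mt x y) = mt (t x) (t y).
Proof. destruct Ht as [_ [_ [H _]]]; apply H. Qed.
Lemma tn x : t (ng x) = ng (t x).
Proof. destruct Ht as [_ [_ [_ [_ [H _]]]]]; apply H. Qed.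
Lemma t0 : t z0 = z0.
Proof. destruct Ht as [_ [_ [_ [_ [_ [_ [H _]]]]]]]; apply H. Qed.
Lemma t1 : t o1 = o1.
Proof. destruct Ht as [_ [_ [_ [_ [_ [_ [_ H]]]]]]]; apply H. Qed.
Lemma tmono x y : le x y -> le (t x) (t y).
Proof. unfold Defs.le; intro H. rewrite <- tm, H. reflexivity. Qed.
Lemma Pt x : P x -> P (t x).
Proof. unfold P; intro H. rewrite <- tn, <- tm, H. apply t0. Qed.
Lemma Piter j x : P x -> P (Nat.iter j t x).
Proof. intro H. induction j; simpl; auto using Pt. Qed.
Lemma Pbig n x : P x -> P (bigmeet_iter A t n x).
Proof. intro H. induction n; simpl. apply P1. apply Pm; auto. apply (Piter (S n)); auto. Qed.

Lemma big_char n b y : le y (bigmeet_iter A t n b) <->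
  (forall j, 1 <= j <= n -> le y (Nat.iter j t b)).
Proof. induction n; simpl.
 - split; intros. lia. apply top.
 - rewrite le_meet, IHn. split.
   + intros [H1 H2] j Hj. destruct (Nat.eq_dec j (S n)) as [->|]. exact H2. apply H1; lia.
   + intros H; split. intros; apply H; lia. apply (H (S n)); lia.
Qed.
Lemma big_le n b j : 1 <= j <= n -> le (bigmeet_iter A t n b) (Nat.iter j t b).
Proof. intro. eapply big_char; eauto. apply le_refl. Qed.

Variable k : nat.
Hypothesis Hk1 : 1 <= k.
Hypothesis Hk : forall x, Nat.iter k t x = x.

Lemma fix_of_le w : le (t w) w -> t w = w.
Proof. intro H.
 assert (H1 : forall n, le (Nat.iter (S n) t w) (Nat.iter n t w)).
 { induction n. exact H. simpl in *. apply tmono. exact IHn. }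
 assert (H2 : forall n, le (Nat.iter (S n) t w) (t w)).
 { induction n. apply le_refl. eapply le_trans. apply H1. exact IHn. }
 apply le_anti. exact H. destruct k as [|k']. lia. rewrite <- (Hk w) at 1. apply H2.
Qed.

Lemma big_fix b : t (bigmeet_iter A t k b) = bigmeet_iter A t k b.
Proof. apply fix_of_le. apply big_char. intros j Hj.
 destruct j as [|j']. lia. destruct j' as [|j''].
 - simpl. apply tmono. rewrite <- (Hk b) at 2. apply big_le. lia.
 - change (Nat.iter (S (S j'')) t b) with (t (Nat.iter (S j'') t b)).
   apply tmono. apply big_le. lia.
Qed.

Lemma big_K a : inK A t (bigmeet_iter A t k (triangle A a)).
Proof. split. apply big_fix. symmetry. apply P_nabla. apply Pbig. apply P_tri. Qed.

Lemma big_one a : bigmeet_iter A t k (triangle A a) = o1 -> a = o1.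
Proof. intro H. apply le1. eapply le_trans; [|apply tri_le].
 rewrite <- H. rewrite <- (Hk (triangle A a)) at 2. apply big_le. lia. Qed.

Lemma tri1 : triangle A o1 = o1.
Proof. rewrite tri_eq, n1, s0. apply m1. Qed.
Lemma iter1 j : Nat.iter j t o1 = o1.
Proof. induction j; simpl; [|rewrite IHj; apply t1]; reflexivity. Qed.
Lemma big1 n : bigmeet_iter A t n o1 = o1.
Proof. induction n. reflexivity. cbn [bigmeet_iter]. rewrite IHn, (iter1 (S n)). apply m1. Qed.

Section Cong.
Variable R : A -> A -> Prop.
Hypothesis HR : is_congruence A t R.
Lemma Rrefl x : R x x. Proof. destruct HR as [H _]; apply H. Qed.
Lemma Rsym x y : R x y -> R y x. Proof. destruct HR as [_ [H _]]; apply H. Qed.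
Lemma Rtrans x y z : R x y -> R y z -> R x z. Proof. destruct HR as [_ [_ [H _]]]; apply H. Qed.
Lemma Rm x x' y y' : R x x' -> R y y' -> R (mt x y) (mt x' y'). Proof. destruct HR as [_ [_ [_ [H _]]]]; apply H. Qed.
Lemma Rj x x' y y' : R x x' -> R y y' -> R (jn x y) (jn x' y'). Proof. destruct HR as [_ [_ [_ [_ [H _]]]]]; apply H. Qed.
Lemma Rn x x' : R x x' -> R (ng x) (ng x'). Proof. destruct HR as [_ [_ [_ [_ [_ [H _]]]]]]; apply H. Qed.
Lemma Rs x x' : R x x' -> R (st x) (st x'). Proof. destruct HR as [_ [_ [_ [_ [_ [_ [H _]]]]]]]; apply H. Qed.
Lemma Rt x x' : R x x' -> R (t x) (t x'). Proof. destruct HR as [_ [_ [_ [_ [_ [_ [_ H]]]]]]]; apply H. Qed.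
Lemma Rnabla x x' : R x x' -> R (nabla A x) (nabla A x').
Proof. intro; unfold nabla; auto using Rn, Rm, Rs. Qed.
Lemma Rtri x x' : R x x' -> R (triangle A x) (triangle A x').
Proof. intro; unfold triangle; auto using Rn, Rnabla. Qed.
Lemma Riter j x x' : R x x' -> R (Nat.iter j t x) (Nat.iter j t x').
Proof. intro; induction j; simpl; auto using Rt. Qed.
Lemma Rbig n x x' : R x x' -> R (bigmeet_iter A t n x) (bigmeet_iter A t n x').
Proof. intro; induction n; simpl. apply Rrefl. apply Rm; auto. apply (Riter (S n)); auto. Qed.

Lemma R_total : R z0 o1 -> forall x y, R x y.
Proof. intros H.
 assert (E : forall x, R z0 x).
 { intro x. assert (H0 : R (mt x z0) (mt x o1)) by (apply Rm; auto using Rrefl). rewrite m0, m1 in H0. exact H0. }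
 intros x y. eapply Rtrans; [apply Rsym, E| apply E]. Qed.

Lemma key a b : R a b -> a <> b -> exists c, c <> o1 /\ R c o1.
Proof. intros Hab Hne.
 set (x := mt a b). set (y := jn a b).
 assert (Rxy : R x y).
 { apply Rtrans with b. unfold x. rewrite <- (mid b) at 2. apply Rm; auto using Rrefl.
   unfold y. rewrite <- (jab b b) at 1. rewrite mid. apply Rsym, Rj; auto using Rrefl. }
 assert (xy : le x y). { eapply le_trans; [apply lb1|apply ub1]. }
 set (c1 := jn (nabla A x) (ng (nabla A y))).
 set (c2 := jn (ng (triangle A y)) (triangle A x)).
 exists (mt c1 c2). split.
 - intro Hc.
   assert (Hc1 : c1 = o1). { apply le1. rewrite <- Hc. apply lb1. }
   assert (Hc2 : c2 = o1). { apply le1. rewrite <- Hc. apply lb2. }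
   assert (Ny : le (nabla A y) (nabla A x)). { apply le_from_compl. apply N1. exact Hc1. }
   assert (Ty : le (triangle A y) (triangle A x)).
   { apply le_from_compl. apply P_tri. unfold c2 in Hc2. rewrite jC. exact Hc2. }
   assert (yx : le y x).
   { assert (yN : le y (jn x (ng (st x)))).
     { rewrite <- nabla_eq. eapply le_trans; [apply x_le_nabla|exact Ny]. }
     eapply le_trans. apply (glb _ _ _ (le_refl y) yN). rewrite mD. apply lub. apply lb2.
     set (zz := mt y (ng (st x))).
     assert (Z1 : le zz (jn (ng y) (st (ng y)))).
     { eapply le_trans; [apply lb1|]. eapply le_trans; [|apply (ax (ng y))].
       rewrite nn. apply ub2. }
     eapply le_trans. apply (glb _ _ _ (le_refl zz) Z1). rewrite mD. apply lub.
     - eapply le_trans; [|apply (ax' x)]. apply glb.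
       eapply le_trans; [apply lb2|]. apply nanti, xy.
       eapply le_trans; [apply lb1|apply lb2].
     - eapply le_trans; [|apply tri_le]. eapply le_trans; [|exact Ty]. rewrite tri_eq.
       apply glb. eapply le_trans; [apply lb1|apply lb1]. apply lb2. }
   assert (Exy : x = y) by (apply le_anti; auto).
   apply Hne. apply le_anti.
   + apply le_trans with y. apply ub1. rewrite <- Exy. apply lb2.
   + apply le_trans with y. apply ub2. rewrite <- Exy. apply lb1.
 - rewrite <- (m1 o1). apply Rm.
   + rewrite <- (compl1 y). unfold c1. apply Rj. apply Rnabla, Rxy. apply Rrefl.
   + assert (E : jn (ng (triangle A y)) (triangle A y) = o1)
       by (unfold triangle at 1; rewrite nn; apply compl1).
     rewrite <- E. unfold c2. apply Rj. apply Rrefl. apply Rtri, Rxy.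
Qed.
End Cong.

Lemma ii_i : nontrivial A ->
  (forall a : A, a <> o1 -> bigmeet_iter A t k (triangle A a) = z0) -> simple A t.
Proof. intros Hnt H. split. exact Hnt. intros R HR.
 destruct (classic (forall x y, R x y -> x = y)) as [|Hn]. left; auto. right.
 apply (R_total R HR).
 apply not_all_ex_not in Hn as [a Hn]. apply not_all_ex_not in Hn as [b Hn].
 apply imply_to_and in Hn as [Hab Hne].
 destruct (key R HR a b Hab Hne) as [c [Hc Rc]].
 rewrite <- (H c Hc). rewrite <- (big1 k), <- tri1.
 apply Rbig; auto. apply Rtri; auto.
Qed.

Lemma iii_ii : (forall x : A, inK A t x <-> (x = z0 \/ x = o1)) ->
  (forall a : A, a <> o1 -> bigmeet_iter A t k (triangle A a) = z0).
Proof. intros H a Ha. destruct (proj1 (H _) (big_K a)) as [E|E]. exact E.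
 exfalso. apply Ha. apply big_one. exact E. Qed.

Lemma i_iii : simple A t -> (forall x : A, inK A t x <-> (x = z0 \/ x = o1)).
Proof. intros [_ Hs] x. split.
 - intros [Htx Hx].
   assert (Px : P x). { rewrite Hx. apply N1. }
   set (R := fun u v => mt u x = mt v x).
   assert (HR : is_congruence A t R).
   { unfold R; repeat split.
     - intros u v Huv. congruence.
     - intros u v w H1 H2. congruence.
     - intros u u' v v' H1 H2.
       assert (E : forall p q, mt (mt p q) x = mt (mt p x) (mt q x)).
       { intros p q. rewrite <- (mid x) at 1. rewrite !mA. f_equal.
         rewrite <- !mA. f_equal. apply mC. }
       rewrite !E, H1, H2. reflexivity.
     - intros u u' v v' H1 H2. rewrite !(mC (jn _ _)), !mD, !(mC x), H1, H2. reflexivity.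
     - intros u u' H.
       assert (E : forall p, mt (ng p) x = mt (ng (mt p x)) x).
       { intro p. unfold P in Px. rewrite nm, (mC (jn _ _)), mD, Px, j0. apply mC. }
       rewrite E, H, <- E. reflexivity.
     - intros u u' H.
       assert (E : forall p, mt (st p) x = mt (st (mt p x)) x).
       { intro p. apply le_anti.
         - apply glb; [|apply lb2]. eapply le_trans; [apply lb1|]. apply santi, lb1.
         - apply glb; [|apply lb2]. apply pc. apply (le_zero_of _ (mt p x) (st (mt p x))).
           apply glb; [apply lb1|]. eapply le_trans; [apply lb2|apply lb2].
           eapply le_trans; [apply lb2|apply lb1]. apply mstar. }
       rewrite E, H, <- E. reflexivity.
     - intros u u' H. rewrite <- Htx, <- !tm, H. reflexivity. }
   destruct (Hs R HR) as [Hid|Htot].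
   + right. apply Hid. unfold R. rewrite mid, m1l. reflexivity.
   + left. specialize (Htot z0 o1). unfold R in Htot. rewrite mC, m0, m1l in Htot. auto.
 - intros [->| ->]; split.
   + apply t0.
   + symmetry; apply P_nabla, P0.
   + apply t1.
   + symmetry; apply P_nabla, P1.
Qed.

End Lat.

Theorem theorem4p5 (k : nat) (A : mpM_sig) (t : A -> A) :
  1 <= k -> is_Ck A k t -> nontrivial A ->
  (simple A t <->
     (forall a : A, a <> one A ->
        bigmeet_iter A t k (triangle A a) = zero A)) /\
  (simple A t <->
     (forall x : A, inK A t x <-> (x = zero A \/ x = one A))).
Proof.
  intros Hk1 [HA [Ht Hk]] Hnt. split; split.
  - intro H. eapply iii_ii; eauto. eapply i_iii; eauto.
  - eapply ii_i; eauto.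
  - eapply i_iii; eauto.
  - intro H. eapply ii_i; eauto. eapply iii_ii; eauto.
Qed.
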